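(* Let $\mathbf{F}$ be a field of characteristic $3$, let $\lambda=(\lambda_1,\lambda_2)$ be a partition with $m=\lambda_1-\lambda_2$, and let $u\in\mathbf{N}_0$ with $\lambda_2\ge 2\cdot3^u$. Let $m_u$ denote the $u$-th base-3 digit of $m$. Then in $S_\mathbf{F}(\lambda)$: \[b(3^u)^2=b(3^u)\Big[\tbinom{m_u+2}{1}+\psi_{m,u}\Big]+b(2\cdot3^u),\] \[b(2\cdot3^u)^2=b(2\cdot3^u)\Big[\tbinom{m_u+1}{2}+\tbinom{m_u+1}{1}\psi_{m,u}\Big],\] \[b(3^u)b(2\cdot3^u)=b(2\cdot3^u)\Big[2\tbinom{m_u}{1}-\psi_{m,u}\Big],\] where integer coefficients are read in $\mathbf{F}$.
   Context: $S_\mathbf{F}(\lambda)=\operatorname{End}_{\mathbf{F}S_r}(M^\lambda)$ is a commutative $\mathbf{F}$-algebra with basis $b(0)=\mathbf{1},\dots,b(\lambda_2)$ and multiplication $b(i)b(j)=\sum_{h=\max\{i,j\}}^{i+j}\binom{h}{i}\binom{h}{j}\binom{m+i+j}{i+j-h}b(h)$, $b(a)=0$ for $a>\lambda_2$. For $m=\sum_u m_u3^u$ in base 3, $m_{<u}=\sum_{s<u}m_s3^s$, and \[\psi_{m,u}=\sum_{k=1}^{3^u-1}\binom{m_{<u}}{3^u-k}b(k)\in S_\mathbf{F}(\lambda).\] *)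

(* Defs.v *)
From HB Require Import structures.
From mathcomp Require Import all_boot all_order all_algebra.
Set Implicit Arguments. Unset Strict Implicit. Unset Printing Implicit Defensive.
Import GRing.Theory.
Local Open Scope ring_scope.

(* The algebra S_F(lambda) for lambda = (l1, l2), m = l1 - l2, modelled on
   its basis b(0), ..., b(l2): an element is its coordinate row vector. *)
Definition SF (F : fieldType) (l2 : nat) := 'rV[F]_(l2.+1).

(* basis vector b(a); b(a) = 0 for a > l2 *)
Definition bb (F : fieldType) (l2 a : nat) : SF F l2 :=
  \row_(j < l2.+1) (if (j == a :> nat) then 1 else 0).

Definition bprod (F : fieldType) (m l2 i j : nat) : SF F l2 :=
  \sum_(maxn i j <= h < (i + j).+1)
     ('C(h, i) * 'C(h, j) * 'C(m + i + j, i + j - h))%N%:R *: @bb F l2 h.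

Definition smul (F : fieldType) (m l2 : nat) (x y : SF F l2) : SF F l2 :=
  \sum_(i < l2.+1) \sum_(j < l2.+1) (x 0 i * y 0 j) *: @bprod F m l2 i j.

Definition psi (F : fieldType) (l2 m u : nat) : SF F l2 :=
  \sum_(1 <= k < 3 ^ u) 'C(m %% 3 ^ u, 3 ^ u - k)%:R *: @bb F l2 k.

Definition digit3 (m u : nat) : nat := (m %/ 3 ^ u) %% 3.

(* Main.v *)
Require Import Defs.
From HB Require Import structures.
From mathcomp Require Import all_boot all_order all_algebra.
From mathcomp Require Import zify.
Import GRing.Theory.
Local Open Scope ring_scope.
Set Implicit Arguments. Unset Strict Implicit.

Lemma coefX1n (R : nzRingType) n k : ((('X + 1 : {poly R}) ^+ n)`_k) = ('C(n, k))%:R.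
Proof.
rewrite exprD1n coef_sum.
under eq_bigr => i _ do rewrite coefMn coefXn.
case: (ltnP k n.+1) => hk.
  rewrite (bigD1 (Ordinal hk)) //= eqxx big1 ?addr0.
    by rewrite mulr1n.
  by move=> i /negPf hi; rewrite eq_sym; move: hi; rewrite -val_eqE /= => ->; rewrite mul0rn.
rewrite big1 ?bin_small //.
by move=> i _; rewrite (_ : (k == i) = false) ?mul0rn //; apply/negbTE; rewrite neq_ltn (leq_trans (ltn_ord i) hk) orbT.
Qed.

Lemma frobX1 (F : fieldType) p (hp : p \in [pchar F]) u :
  ('X + 1 : {poly F}) ^+ (p ^ u) = 'X^(p ^ u) + 1.
Proof.
have hp' : p \in [pchar {poly F}] by rewrite pchar_poly.
elim: u => [|u IH]; first by rewrite expn0 !expr1.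
rewrite expnSr !exprM IH exprDn_pchar ?expr1n //.
by rewrite pnatE ?(pcharf_prime hp).
Qed.

Lemma lucas (F : fieldType) p (hp : p \in [pchar F]) u a b r s :
  (r < p ^ u)%N -> (s < p ^ u)%N ->
  ('C(a * p ^ u + r, b * p ^ u + s))%:R = ('C(a, b) * 'C(r, s))%:R :> F.
Proof.
move=> hr hs; set q := (p ^ u)%N in hr hs *.
rewrite -(coefX1n F) exprD (mulnC a) exprM frobX1 // -/q exprD1n mulr_suml coef_sum.
under eq_bigr => i _ do rewrite mulrnAl -exprM coefMn coefXnM coefX1n.
have E : forall i : 'I_a.+1, (if (b * q + s < q * i)%N then 0 else ('C(r, b * q + s - q * i))%:R : F) *+ 'C(a, i)
   = (if (i == b :> nat) then ('C(r, s))%:R else 0) *+ 'C(a, i).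
  move=> i; case: (ltngtP i b) => hib.
  - have -> : (b * q + s < q * i)%N = false by apply/negbTE; rewrite -leqNgt; nia.
    rewrite bin_small //; nia.
  - have -> : (b * q + s < q * i)%N = true by nia.
    by [].
  - by rewrite hib ltnNge mulnC leq_addr /= addKn.
rewrite (eq_bigr _ (fun i _ => E i)).
case: (ltnP b a.+1) => hb.
  rewrite (bigD1 (Ordinal hb)) //= eqxx big1 ?addr0.
    by rewrite -mulr_natr -natrM mulnC.
  by move=> i /negPf hi; move: hi; rewrite -val_eqE /= => ->; rewrite mul0rn.
rewrite (bin_small hb) mul0n big1 // => i _.
by rewrite (_ : (i == b :> nat) = false) ?mul0rn //; apply/negbTE; rewrite neq_ltn (leq_trans (ltn_ord i) hb).
Qed.

Lemma L3 (F : fieldType) (hF : 3%N \in [pchar F]) u a b r s :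
  (r < 3 ^ u)%N -> (s < 3 ^ u)%N ->
  ('C(a * 3 ^ u + r, b * 3 ^ u + s))%:R = ('C(a, b) * 'C(r, s))%:R :> F.
Proof. exact: lucas. Qed.

Lemma sum_delta (F : fieldType) (f : nat -> F) lo hi h :
  \sum_(lo <= k < hi) (if k == h then f k else 0) = if (lo <= h < hi)%N then f h else 0.
Proof. by rewrite -big_mkcond big_nat1_eq. Qed.

Definition cf (F : fieldType) (m a j h : nat) : F :=
  if (maxn a j <= h <= a + j)%N then ('C(h, a) * 'C(h, j) * 'C(m + a + j, a + j - h))%N%:R else 0.

Lemma bbE (F : fieldType) l2 a (h : 'I_l2.+1) : @bb F l2 a 0 h = if (h == a :> nat) then 1 else 0.
Proof. by rewrite mxE. Qed.

Lemma bprodE (F : fieldType) m l2 a j (h : 'I_l2.+1) : bprod F m l2 a j 0 h = cf F m a j h.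
Proof.
rewrite /bprod summxE.
rewrite (eq_bigr (fun k => if k == h :> nat then ('C(k, a) * 'C(k, j) * 'C(m + a + j, a + j - k))%N%:R else 0)); last first.
  by move=> k _; rewrite mxE bbE eq_sym; case: eqP => [->|]; rewrite ?mulr1 ?mulr0.
by rewrite sum_delta /cf ltnS.
Qed.

Definition ell (F : fieldType) l2 (g : nat -> F) (y : SF F l2) : F :=
  \sum_(j < l2.+1) y 0 j * g j.

Lemma smulE (F : fieldType) m l2 a y (h : 'I_l2.+1) : (a <= l2)%N ->
  @smul F m l2 (@bb F l2 a) y 0 h = ell (fun j => cf F m a j h) y.
Proof.
move=> ha; rewrite /smul summxE (bigD1 (Ordinal (ha : a < l2.+1)%N)) //= [X in _ + X]big1 ?addr0.
  rewrite summxE /ell; apply: eq_bigr => j _.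
  by rewrite mxE bbE eqxx mul1r bprodE.
move=> i hi; rewrite summxE big1 // => j _.
rewrite mxE bbE (_ : (i == a :> nat) = false) ?mul0r ?mul0r //.
by apply/negbTE; move: hi; apply: contra => /eqP hi; apply/eqP/val_inj.
Qed.

Lemma ellD (F : fieldType) l2 g (y z : SF F l2) : ell g (y + z) = ell g y + ell g z.
Proof. by rewrite /ell -big_split; apply: eq_bigr => j _; rewrite mxE mulrDl. Qed.

Lemma ellN (F : fieldType) l2 g (y : SF F l2) : ell g (- y) = - ell g y.
Proof. by rewrite /ell -sumrN; apply: eq_bigr => j _; rewrite mxE mulNr. Qed.

Lemma ellZ (F : fieldType) l2 g c (y : SF F l2) : ell g (c *: y) = c * ell g y.
Proof. by rewrite /ell mulr_sumr; apply: eq_bigr => j _; rewrite mxE mulrA. Qed.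

Lemma ellS (F : fieldType) l2 g lo hi (f : nat -> SF F l2) :
  ell g (\sum_(lo <= k < hi) f k) = \sum_(lo <= k < hi) ell g (f k).
Proof.
rewrite /ell exchange_big /=; apply: eq_bigr => j _.
by rewrite summxE mulr_suml.
Qed.

Lemma ellb (F : fieldType) l2 g a : (a <= l2)%N -> ell g (@bb F l2 a) = g a.
Proof.
move=> ha; rewrite /ell (bigD1 (Ordinal (ha : a < l2.+1)%N)) //= bbE eqxx mul1r big1 ?addr0 //.
move=> i hi; rewrite bbE (_ : (i == a :> nat) = false) ?mul0r //.
by apply/negbTE; move: hi; apply: contra => /eqP hi; apply/eqP/val_inj.
Qed.

Lemma ellpsi (F : fieldType) l2 m u g : (3 ^ u <= l2)%N ->
  ell g (@psi F l2 m u) = \sum_(1 <= k < 3 ^ u) ('C(m %% 3 ^ u, 3 ^ u - k))%:R * g k.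
Proof.
move=> hq; rewrite /psi ellS big_nat_cond [RHS]big_nat_cond; apply: eq_bigr => k /andP[/andP[_ hk] _].
by rewrite ellZ ellb // ltnW // (leq_trans hk hq).
Qed.

Lemma L3q (F : fieldType) (hF : 3%N \in [pchar F]) q u a b r s : q = (3 ^ u)%N ->
  (r < q)%N -> (s < q)%N ->
  ('C(a * q + r, b * q + s))%:R = ('C(a, b) * 'C(r, s))%:R :> F.
Proof. by move=> ->; exact: lucas. Qed.

Lemma cf_single (F : fieldType) (hF : 3%N \in [pchar F]) q u m c k r :
  q = (3 ^ u)%N -> (1 <= c)%N -> (1 <= k < q)%N ->
  cf F m (c * q) k (c * q + r) = if r == k then 1 else 0.
Proof.
move=> hq hc /andP[k1 kq].
have q0 : (0 < q)%N by rewrite hq expn_gt0.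
rewrite /cf.
have -> : maxn (c * q) k = (c * q)%N by apply/maxn_idPl; nia.
rewrite leq_addr /= leq_add2l.
case: (ltngtP r k) => hrk.
- rewrite !natrM.
  have := L3q (F:=F) hF c 0 hq (ltn_trans hrk kq) kq.
  rewrite mul0n add0n => ->.
  by rewrite (bin_small hrk) muln0 mulr0n mulr0 mul0r.
- by [].
- rewrite hrk subnn bin0 muln1 !natrM.
  have := L3q (F:=F) hF c c hq kq q0; rewrite addn0 => ->.
  have := L3q (F:=F) hF c 0 hq kq kq; rewrite mul0n add0n => ->.
  by rewrite !binn !bin0 !muln1 mul1r.
Qed.

Lemma cf_in (F : fieldType) m a j h : (maxn a j <= h <= a + j)%N ->
  cf F m a j h = ('C(h, a) * 'C(h, j) * 'C(m + a + j, a + j - h))%N%:R.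
Proof. by rewrite /cf => ->. Qed.

Lemma cf_out (F : fieldType) m a j h : ~~ (maxn a j <= h <= a + j)%N -> cf F m a j h = 0.
Proof. by rewrite /cf => /negPf ->. Qed.

Lemma Ssum (F : fieldType) (hF : 3%N \in [pchar F]) q u m c a h :
  q = (3 ^ u)%N -> a = (c * q)%N -> (1 <= c)%N -> (a <= h)%N ->
  \sum_(1 <= k < q) ('C(m %% q, q - k))%:R * cf F m a k h
   = if (1 <= h - a < q)%N then ('C(m %% q, q - (h - a)))%:R else 0.
Proof.
move=> hq ha hc hah.
have -> : h = (c * q + (h - a))%N by rewrite -ha subnKC.
rewrite -ha addKn.
rewrite (eq_big_nat _ _ (F2 := fun k => if k == (h - a)%N then ('C(m %% q, q - k))%:R else 0)).
  by rewrite sum_delta.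
move=> k hk; rewrite ha (cf_single _ _ _ hq) //.
by rewrite [_ == k]eq_sym; case: eqP; rewrite ?mulr1 ?mulr0.
Qed.

Lemma Szero (F : fieldType) m a h (f : nat -> F) lo hi : (h < a)%N ->
  \sum_(lo <= k < hi) f k * cf F m a k h = 0.
Proof.
move=> hh; rewrite big1 // => k _; rewrite cf_out ?mulr0 //.
by apply/negP => /andP[H _]; move: H; rewrite geq_max leqNgt hh.
Qed.

Lemma digE (F : fieldType) (hF : 3%N \in [pchar F]) m u c :
  ((digit3 m u + c)%N%:R : F) = (m %/ 3 ^ u + c)%N%:R.
Proof.
by rewrite /digit3 -(GRing.natr_mod_pchar hF (_ + c)) modnDml (GRing.natr_mod_pchar hF).
Qed.

Lemma Lc (F : fieldType) (hF : 3%N \in [pchar F]) q u N K a b r s :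
  q = (3 ^ u)%N -> (r < q)%N -> (s < q)%N -> N = (a * q + r)%N -> K = (b * q + s)%N ->
  ('C(N, K))%:R = ('C(a, b) * 'C(r, s))%:R :> F.
Proof. by move=> hq hr hs -> ->; apply: (L3q hF _ _ hq). Qed.

Lemma key1 (F : fieldType) (hF : 3%N \in [pchar F]) q u m h : q = (3 ^ u)%N ->
  cf F m q q h = ('C(digit3 m u + 2, 1))%:R * cf F m q 0 h
     + \sum_(1 <= k < q) ('C(m %% q, q - k))%:R * cf F m q k h
     + (if h == (2 * q)%N then 1 else 0).
Proof.
move=> hq.
have q0 : (0 < q)%N by rewrite hq expn_gt0.
have hm : m = (m %/ q * q + m %% q)%N := divn_eq m q.
have m'q : (m %% q < q)%N := ltn_pmod m q0.
have hd := digE hF m u 2; rewrite -hq in hd.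
set n := (m %/ q)%N in hm hd *; set m' := (m %% q)%N in hm m'q *.
have h3 : (3 %:R : F) = 0 by apply: GRing.pcharf0 hF.
case: (ltnP h q) => hh.
  rewrite (Szero _ _ _ _ hh) !cf_out ?mulr0 ?addr0.
  - by rewrite ifF ?add0r //; apply/eqP; lia.
  - by apply/negP => /andP[H _]; move: H; rewrite geq_max leqNgt hh.
  - by apply/negP => /andP[H _]; move: H; rewrite geq_max leqNgt hh.
rewrite (@Ssum F hF q u m 1 q h hq) ?mul1n //.
case: (ltngtP h q) hh => // hh _.
-
  case: (ltngtP h (2 * q)%N) => hh2.
  + rewrite ifT; last by lia.
    rewrite [cf _ _ _ 0 _]cf_out; last by apply/negP; rewrite maxn0 addn0; lia.
    rewrite mulr0 add0r addr0 cf_in; last by rewrite maxnn; lia.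
    rewrite !natrM (@Lc F hF q u h q 1 1 (h - q) 0 hq); [|lia..].
    rewrite (@Lc F hF q u (m + q + q) (q + q - h) (n + 2) 0 m' (q - (h - q)) hq); [|lia..].
    by rewrite !bin0 !binn !mul1n !mul1r.
  + rewrite ifF; last by lia.
    by rewrite !cf_out ?mulr0 ?addr0 //; apply/negP; rewrite ?maxn0 ?maxnn ?addn0; lia.
  + rewrite ifF; last by lia.
    rewrite [cf _ _ _ 0 _]cf_out; last by apply/negP; rewrite maxn0 addn0; lia.
    rewrite mulr0 !add0r cf_in; last by rewrite maxnn; lia.
    rewrite (_ : (q + q - h = 0)%N); last by lia.
    rewrite bin0 muln1 natrM (@Lc F hF q u h q 2 1 0 0 hq); [|lia..].
    rewrite -natrM -(GRing.natr_mod_pchar hF).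
    by [].
-
  rewrite hh subnn /= ifF; last by lia.
  rewrite cf_in; last by rewrite maxnn; lia.
  rewrite cf_in; last by rewrite maxn0; lia.
  rewrite !binn bin0 !mul1n !addn0 subnn bin0 mulr1 !addr0.
  rewrite (@Lc F hF q u (m + q + q) (q + q - q) (n + 2) 1 m' 0 hq); [|lia..].
  by rewrite bin1 bin1 bin0 muln1 hd.
Qed.

Lemma C2lem (F : fieldType) (hF : 3%N \in [pchar F]) n :
  ('C(n + 4, 2))%:R = ('C((n %% 3)%N + 1, 2))%:R :> F.
Proof.
have h3 : (3 %:R : F) = 0 by apply: GRing.pcharf0 hF.
rewrite (@Lc F hF 3 1 (n + 4) 2 ((n + 4) %/ 3) 0 ((n + 4) %% 3) 2 erefl); last first.
- by [].
- exact: divn_eq.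
- by [].
- by rewrite ltn_mod.
rewrite bin0 mul1n -modnDml.
have : (n %% 3 < 3)%N by rewrite ltn_mod.
by case: (n %% 3)%N => [|[|[|k]]] //= _; rewrite h3.
Qed.

Lemma key2 (F : fieldType) (hF : 3%N \in [pchar F]) q u m h : q = (3 ^ u)%N ->
  cf F m (2 * q) (2 * q) h = ('C(digit3 m u + 1, 2))%:R * cf F m (2 * q) 0 h
     + ('C(digit3 m u + 1, 1))%:R * \sum_(1 <= k < q) ('C(m %% q, q - k))%:R * cf F m (2 * q) k h.
Proof.
move=> hq.
have q0 : (0 < q)%N by rewrite hq expn_gt0.
have hm : m = (m %/ q * q + m %% q)%N := divn_eq m q.
have m'q : (m %% q < q)%N := ltn_pmod m q0.
have hd := digE hF m u 1; rewrite -hq in hd.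
have hdig : digit3 m u = ((m %/ q) %% 3)%N by rewrite /digit3 hq.
set n := (m %/ q)%N in hm hd hdig *; set m' := (m %% q)%N in hm m'q *.
have h3 : (3 %:R : F) = 0 by apply: GRing.pcharf0 hF.
have h6 : (6 %:R : F) = 0 by rewrite -(GRing.natr_mod_pchar hF).
case: (ltnP h (2 * q)) => hh.
  rewrite (Szero _ _ _ _ hh) !cf_out ?mulr0 ?addr0 //.
  - by apply/negP => /andP[H _]; move: H; rewrite geq_max leqNgt hh.
  - by apply/negP => /andP[H _]; move: H; rewrite geq_max leqNgt hh.
rewrite (@Ssum F hF q u m 2 (2 * q) h hq) //.
case: (ltngtP h (2 * q)) hh => // hh _; last first.
-
  rewrite hh subnn /=.
  rewrite cf_in; last by rewrite maxnn; lia.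
  rewrite cf_in; last by rewrite maxn0; lia.
  rewrite !binn bin0 !mul1n !addn0 subnn bin0 mulr1 mulr0 addr0.
  rewrite (@Lc F hF q u (m + 2 * q + 2 * q) (2 * q + 2 * q - 2 * q) (n + 4) 2 m' 0 hq); [|lia..].
  by rewrite bin0 muln1 hdig C2lem.
rewrite [cf _ _ _ 0 _]cf_out; last by apply/negP; rewrite maxn0 addn0; lia.
rewrite mulr0 add0r.
case: (ltnP h (3 * q)) => hh3.
  rewrite ifT; last by lia.
  rewrite cf_in; last by rewrite maxnn; lia.
  rewrite !natrM (@Lc F hF q u h (2 * q) 2 2 (h - 2 * q) 0 hq); [|lia..].
  rewrite (@Lc F hF q u (m + 2 * q + 2 * q) (2 * q + 2 * q - h) (n + 4) 1 m' (q - (h - 2 * q)) hq); [|lia..].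
  rewrite !bin0 !binn !bin1 !mul1n !mul1r !natrM hd.
  have -> : (n + 4 = n + 1 + 3)%N by rewrite -addnA.
  by rewrite natrD h3 addr0 -/m'.
rewrite ifF; last by lia.
rewrite mulr0.
case: (ltnP (4 * q) h) => hh4.
  by rewrite cf_out //; apply/negP; rewrite maxnn; lia.
rewrite cf_in; last by rewrite maxnn; lia.
rewrite !natrM.
case: (ltnP h (4 * q)) => hh5.
  rewrite (@Lc F hF q u h (2 * q) 3 2 (h - 3 * q) 0 hq); [|lia..].
  by rewrite natrM h3 !mul0r.
rewrite (@Lc F hF q u h (2 * q) 4 2 0 0 hq); [|lia..].
by rewrite natrM h6 !mul0r.
Qed.

Lemma key3 (F : fieldType) (hF : 3%N \in [pchar F]) q u m h : q = (3 ^ u)%N ->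
  cf F m q (2 * q) h = ((2 * 'C(digit3 m u, 1))%N%:R) * cf F m (2 * q) 0 h
     - \sum_(1 <= k < q) ('C(m %% q, q - k))%:R * cf F m (2 * q) k h.
Proof.
move=> hq.
have q0 : (0 < q)%N by rewrite hq expn_gt0.
have hm : m = (m %/ q * q + m %% q)%N := divn_eq m q.
have m'q : (m %% q < q)%N := ltn_pmod m q0.
have hd := digE hF m u 0; rewrite -hq !addn0 in hd.
set n := (m %/ q)%N in hm hd *; set m' := (m %% q)%N in hm m'q *.
have h3 : (3 %:R : F) = 0 by apply: GRing.pcharf0 hF.
case: (ltnP h (2 * q)) => hh.
  rewrite (Szero _ _ _ _ hh) !cf_out ?mulr0 ?subr0 //.
  - by apply/negP => /andP[H _]; move: H; rewrite geq_max leqNgt hh.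
  - by apply/negP => /andP[H _]; move: H; rewrite geq_max; lia.
rewrite (@Ssum F hF q u m 2 (2 * q) h hq) //.
case: (ltngtP h (2 * q)) hh => // hh _; last first.
-
  rewrite hh subnn /= subr0.
  rewrite (@cf_in F m q (2 * q) (2 * q)); last by lia.
  rewrite (@cf_in F m (2 * q) 0 (2 * q)); last by lia.
  rewrite !binn bin0 !mul1n !addn0 subnn bin0 !muln1 mulr1.
  rewrite !natrM (@Lc F hF q u (2 * q) q 2 1 0 0 hq); [|lia..].
  rewrite (@Lc F hF q u (m + q + 2 * q) (q + 2 * q - 2 * q) (n + 3) 1 m' 0 hq); [|lia..].
  rewrite !bin1 !bin0 !muln1 hd natrD h3 addr0.
  reflexivity.
rewrite [cf _ _ _ 0 _]cf_out; last by apply/negP; rewrite maxn0 addn0; lia.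
rewrite mulr0 add0r.
case: (ltnP h (3 * q)) => hh3.
  rewrite ifT; last by lia.
  rewrite cf_in; last by lia.
  rewrite !natrM (@Lc F hF q u h (2 * q) 2 2 (h - 2 * q) 0 hq); [|lia..].
  rewrite (@Lc F hF q u h q 2 1 (h - 2 * q) 0 hq); [|lia..].
  rewrite (@Lc F hF q u (m + q + 2 * q) (q + 2 * q - h) (n + 3) 0 m' (q - (h - 2 * q)) hq); [|lia..].
  rewrite !bin0 !binn !bin1 !mul1n !natrM -/m'.
  by rewrite !mulr1; apply/eqP; rewrite -subr_eq0 opprK -[X in _ + X]mul1r -mulrDl natr1 h3 mul0r //.
rewrite ifF; last by lia.
rewrite oppr0.
case: (ltnP (3 * q) h) => hh4.
  by rewrite cf_out //; apply/negP; lia.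
rewrite cf_in; last by lia.
rewrite !natrM (@Lc F hF q u h q 3 1 0 0 hq); [|lia..].
by rewrite natrM h3 !mul0r.
Qed.

Theorem mainTheorem5 (F : fieldType) (hF : 3%N \in [pchar F])
  (l1 l2 : nat) (hl : (l2 <= l1)%N) (u : nat) (hu : (2 * 3 ^ u <= l2)%N) :
  let m := (l1 - l2)%N in
  let b := @bb F l2 in
  let mul := @smul F m l2 in
  let one := b 0%N in
  let ps := @psi F l2 m u in
  let mu := digit3 m u in
  [/\ mul (b (3 ^ u)%N) (b (3 ^ u)%N)
        = mul (b (3 ^ u)%N) ('C(mu + 2, 1)%:R *: one + ps) + b (2 * 3 ^ u)%N,
      mul (b (2 * 3 ^ u)%N) (b (2 * 3 ^ u)%N)
        = mul (b (2 * 3 ^ u)%N) ('C(mu + 1, 2)%:R *: one + 'C(mu + 1, 1)%:R *: ps)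
    & mul (b (3 ^ u)%N) (b (2 * 3 ^ u)%N)
        = mul (b (2 * 3 ^ u)%N) ((2 * 'C(mu, 1))%N%:R *: one - ps)].
Proof.
move=> m b mul one ps mu.
have hq1 : (3 ^ u <= l2)%N by apply: leq_trans hu; rewrite leq_pmull.
have hq0 : (0 <= l2)%N by [].
rewrite /mul /b /one /ps /mu.
split; apply/rowP => h.
- rewrite [RHS]mxE !smulE // ellD ellZ !ellb // ellpsi // bbE /=.
  exact: key1.
- rewrite !smulE // ellD !ellZ !ellb // ellpsi // /=.
  exact: key2.
- rewrite !smulE // ellD ellN ellZ !ellb // ellpsi // /=.
  exact: key3.
Qed.
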